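(* Let $T\in SO(n)$ and suppose neither $1$ nor $-1$ is an eigenvalue of $T$. Then $T$ is real in $SO(n)$ if and only if $n\not\equiv 2\pmod 4$.
   Context: An element $g$ of a group $G$ is real in $G$ if there is $h\in G$ with $hgh^{-1}=g^{-1}$. *)

(* Defs.v *)
From mathcomp Require Import all_boot all_order all_algebra.
From mathcomp Require Import reals.
Set Implicit Arguments. Unset Strict Implicit. Unset Printing Implicit Defensive.
Import Order.TTheory GRing.Theory Num.Theory.
Local Open Scope ring_scope.

Definition in_SO (R : realType) (n : nat) (M : 'M[R]_n) : Prop :=
  M *m M^T = 1%:M /\ \det M = 1.

Definition real_in_SO (R : realType) (n : nat) (g : 'M[R]_n) : Prop :=
  exists h : 'M[R]_n, in_SO h /\ h *m g *m invmx h = invmx g.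

(* Main.v *)
Require Import Defs.
From mathcomp Require Import all_boot all_order all_algebra.
From mathcomp Require Import reals.
From mathcomp Require Import complex spectral.
From mathcomp Require Import zify.
Set Implicit Arguments. Unset Strict Implicit. Unset Printing Implicit Defensive.
Import Order.TTheory GRing.Theory Num.Theory.
Local Open Scope ring_scope.

Section Aux.
Variable R : realType.
Local Notation C := (R[i]).

Definition cx p q (A : 'M[R]_(p, q)) : 'M[C]_(p, q) := map_mx (real_complex R) A.
Definition cc p q (A : 'M[C]_(p, q)) : 'M[C]_(p, q) := map_mx Num.conj A.
Definition ct p q (A : 'M[C]_(p, q)) : 'M[C]_(q, p) := cc A^T.

Lemma conjE (z : C) : Num.conj z = conjc z.
Proof. by []. Qed.

Lemma cxM p q r (A : 'M[R]_(p, q)) (B : 'M[R]_(q, r)) : cx (A *m B) = cx A *m cx B.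
Proof. exact: map_mxM. Qed.
Lemma ccM p q r (A : 'M[C]_(p, q)) (B : 'M[C]_(q, r)) : cc (A *m B) = cc A *m cc B.
Proof. exact: map_mxM. Qed.
Lemma ccK p q (A : 'M[C]_(p, q)) : cc (cc A) = A.
Proof. by apply/matrixP=> i j; rewrite !mxE conjCK. Qed.
Lemma cc_cx p q (A : 'M[R]_(p, q)) : cc (cx A) = cx A.
Proof. by apply/matrixP=> i j; rewrite !mxE conjE /=; congr Complex; rewrite oppr0. Qed.
Lemma cc_tr p q (A : 'M[C]_(p, q)) : cc A^T = (cc A)^T.
Proof. by rewrite /cc map_trmx. Qed.
Lemma cx_tr p q (A : 'M[R]_(p, q)) : cx A^T = (cx A)^T.
Proof. by rewrite /cx map_trmx. Qed.
Lemma cx1 p : cx (1%:M : 'M[R]_p) = 1%:M.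
Proof. exact: map_mx1. Qed.
Lemma cc1 p : cc (1%:M : 'M[C]_p) = 1%:M.
Proof. exact: map_mx1. Qed.
Lemma cx_inj p q : injective (@cx p q).
Proof. exact: map_mx_inj. Qed.

Lemma real_of_conj (z : C) : Num.conj z = z -> z = (complex.Re z)%:C%C.
Proof.
case: z => a b; rewrite conjE /= => -[] /eqP; rewrite -subr_eq0.
rewrite -opprD oppr_eq0 -mulr2n mulrn_eq0 /= => /eqP ->.
by [].
Qed.

Lemma real_mx p q (A : 'M[C]_(p, q)) : cc A = A -> A = cx (map_mx (@complex.Re R) A).
Proof.
move=> /matrixP H; apply/matrixP=> i j; rewrite !mxE; apply: real_of_conj.
by have := H i j; rewrite mxE.
Qed.

End Aux.

Section Diag.
Variables (F : comNzRingType) (n : nat).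
Implicit Types (a b : 'I_n -> F) (A : 'M[F]_n).
Definition dg a : 'M[F]_n := diag_mx (\row_k a k).

Lemma dgE a i j : dg a i j = a i *+ (i == j).
Proof. by rewrite /dg !mxE. Qed.
Lemma dgMl a A i j : (dg a *m A) i j = a i * A i j.
Proof. by rewrite mul_diag_mx !mxE. Qed.
Lemma dgMr a A i j : (A *m dg a) i j = A i j * a j.
Proof. by rewrite mul_mx_diag !mxE. Qed.
Lemma dgM a b : dg a *m dg b = dg (fun k => a k * b k).
Proof. by apply/matrixP=> i j; rewrite dgMl !dgE mulrnAr. Qed.
Lemma dgD a b : dg a + dg b = dg (fun k => a k + b k).
Proof. by apply/matrixP=> i j; rewrite mxE !dgE mulrnDl. Qed.
Lemma dg1 : dg (fun _ => 1) = 1%:M.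
Proof. by apply/matrixP=> i j; rewrite dgE mxE. Qed.
Lemma dg0 : dg (fun _ => 0) = 0.
Proof. by apply/matrixP=> i j; rewrite dgE mxE mul0rn. Qed.
Lemma dg_tr a : (dg a)^T = dg a.
Proof. exact: tr_diag_mx. Qed.
Lemma dgC a b : dg a *m dg b = dg b *m dg a.
Proof.
apply/matrixP=> i j; rewrite dgMl dgMr !dgE.
by case: (i =P j) => [->|_]; rewrite ?mulr1n ?mulr0n ?mulr0 ?mul0r // mulrC.
Qed.
Lemma det_dg a : \det (dg a) = \prod_k a k.
Proof. by rewrite /dg det_diag; apply: eq_bigr => k _; rewrite mxE. Qed.
Lemma tr_dg a : \tr (dg a) = \sum_k a k.
Proof. by rewrite /dg mxtrace_diag; apply: eq_bigr => k _; rewrite mxE. Qed.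
End Diag.

Lemma sign_count (F : numFieldType) n (e : 'I_n -> F) :
  (forall k, e k ^+ 2 = 1) -> \sum_k e k = 0 ->
  exists s, n = (s + s)%N /\ \prod_k e k = (-1) ^+ s.
Proof.
move=> e2 e0; set A := [pred k | e k == -1].
have eB k : k \notin A -> e k = 1.
  rewrite inE => /negPf eN; have /eqP := e2 k; rewrite sqrf_eq1.
  by rewrite eN orbF => /eqP.
have eA k : k \in A -> e k = -1 by rewrite inE => /eqP.
exists #|A|.
have Hs : \sum_k e k = (#|[predC A]|)%:R - (#|A|)%:R.
  rewrite (bigID (mem A)) /= addrC; congr (_ + _).
    rewrite (eq_bigr (fun _ => 1)); last by move=> k /eB.
    by rewrite sumr_const.
  rewrite (eq_bigr (fun _ => -1)); last by move=> k /eA.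
  by rewrite sumr_const -mulNrn.
have Hp : \prod_k e k = (-1) ^+ #|A|.
  rewrite (bigID (mem A)) /=.
  rewrite [X in _ * X](eq_bigr (fun _ => 1)); last by move=> k /eB.
  rewrite big1_eq mulr1 (eq_bigr (fun _ => -1)); last by move=> k /eA.
  by rewrite prodr_const.
split=> //.
move: e0; rewrite Hs => /eqP; rewrite subr_eq0 eqr_nat => /eqP H.
have := cardC A; rewrite H card_ord => ->.
by [].
Qed.

Lemma cc_dg (R : realType) n (a : 'I_n -> R[i]) : cc (dg a) = dg (fun k => Num.conj (a k)).
Proof. by apply/matrixP=> i j; rewrite mxE !dgE rmorphMn. Qed.

Section Alg.
Variables (F : comNzRingType) (n : nat) (X Xb pi qi : 'M[F]_n).
Hypotheses (piq : pi + qi = 1%:M) (pipi : pi *m pi = pi)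
  (piXpi : pi *m X *m pi = 0) (qiXqi : qi *m X *m qi = 0)
  (piXbpi : pi *m Xb *m pi = 0) (XXb : X *m Xb = 1%:M) (XbX : Xb *m X = 1%:M).

Lemma Xpi_g : X *m pi = qi *m X *m pi.
Proof.
have := congr1 (fun M => M *m X *m pi) piq.
by rewrite /= mul1mx !mulmxDl piXpi add0r.
Qed.

Lemma XpiXb_g : X *m pi *m Xb = qi.
Proof.
have piE : pi = 1%:M - qi by rewrite -piq addrK.
rewrite Xpi_g piE mulmxBr mulmx1 mulmxBl qiXqi mul0mx subr0.
by rewrite -mulmxA XXb mulmx1.
Qed.

Lemma W2_g : (pi *m Xb + X *m pi) *m (pi *m Xb + X *m pi) = 1%:M.
Proof.
rewrite mulmxDl !mulmxDr !mulmxA piXbpi mul0mx add0r.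
rewrite -(mulmxA pi Xb X) XbX mulmx1 pipi.
rewrite -(mulmxA X pi pi) pipi XpiXb_g.
rewrite -(mulmxA X pi X) -(mulmxA X (pi *m X) pi) piXpi mulmx0 addr0.
exact: piq.
Qed.

Lemma trW_g : \tr (pi *m Xb + X *m pi) = 0.
Proof.
have -> : pi *m Xb = pi *m (pi *m Xb) by rewrite mulmxA pipi.
have -> : X *m pi = X *m pi *m pi by rewrite -mulmxA pipi.
rewrite mxtraceD mxtrace_mulC piXbpi mxtrace0 add0r.
by rewrite mxtrace_mulC mulmxA piXpi mxtrace0.
Qed.
End Alg.

Section Gen.
Variables (F : comNzRingType) (n : nat).
Implicit Types (A B M N P Pt Pb Pc pi : 'M[F]_n).
Lemma conjM A B M N : B *m A = 1%:M -> (A *m M *m B) *m (A *m N *m B) = A *m (M *m N) *m B.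
Proof. by move=> BA; rewrite !mulmxA -(mulmxA _ B A) BA mulmx1. Qed.
Lemma conj1 A B : A *m B = 1%:M -> A *m 1%:M *m B = 1%:M.
Proof. by rewrite mulmx1. Qed.
Lemma real_g P Pt Pb Pc pi : Pc *m P = 1%:M -> Pt *m Pb = 1%:M ->
  Pt *m (pi *m (P *m Pt) + (Pb *m Pc) *m pi) *m Pb =
  Pc *m (pi *m (Pb *m Pc) + (P *m Pt) *m pi) *m P.
Proof.
move=> H1 H2.
rewrite !mulmxDr !mulmxDl !mulmxA -(mulmxA _ Pt Pb) H2 mulmx1 !mul1mx.
by rewrite -(mulmxA _ Pc P) H1 mulmx1 addrC !mul1mx.
Qed.
Lemma conj_inj A B M N : A *m B = 1%:M -> B *m A = 1%:M ->
  A *m M *m B = A *m N *m B -> M = N.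
Proof.
move=> AB BA H; have := congr1 (fun K => B *m K *m A) H.
by rewrite /= !mulmxA BA !mul1mx -!mulmxA BA !mulmx1.
Qed.
Lemma conj_cancel A B M : A *m B = 1%:M -> A *m (B *m M *m A) *m B = M.
Proof. by move=> AB; rewrite !mulmxA AB mul1mx -mulmxA AB mulmx1. Qed.
Lemma tr_conj A B M : B *m A = 1%:M -> \tr (A *m M *m B) = \tr M.
Proof. by move=> BA; rewrite mxtrace_mulC mulmxA BA mul1mx. Qed.
End Gen.

Section L1.
Variables (R : rcfType) (n : nat).
Local Notation C := (R[i]).
Lemma L1 (c Q : 'M[C]_n) : c *m Q = Q *m c -> Q *m Q = Q ->
  map_mx Num.conj c = c -> map_mx Num.conj Q = 1%:M - Q ->
  0 <= \det c.
Proof.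
move=> cQ QQ cc cQb.
set z := \det (c *m Q + (1%:M - Q)).
have E : (c *m Q + (1%:M - Q)) *m (Q + c *m (1%:M - Q)) = c.
  have [Qb QbE] : {Qb | Qb = 1%:M - Q} by exists (1%:M - Q).
  rewrite -QbE.
  have QQb : Q *m Qb = 0 by rewrite QbE mulmxBr mulmx1 QQ subrr.
  have QbQ : Qb *m Q = 0 by rewrite QbE mulmxBl mul1mx QQ subrr.
  have QbQb : Qb *m Qb = Qb by rewrite {1}QbE mulmxBl mul1mx QQb subr0.
  have cQbx : c *m Qb = Qb *m c by rewrite QbE mulmxBr mulmxBl mulmx1 mul1mx cQ.
  rewrite mulmxDl !mulmxDr QbQ add0r -(mulmxA c Q Q) QQ.
  rewrite -(mulmxA c Q) (mulmxA Q c Qb) -cQ -(mulmxA c Q Qb) QQb !mulmx0 addr0.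
  rewrite (mulmxA Qb c Qb) -cQbx -(mulmxA c Qb Qb) QbQb -mulmxDr QbE addrC subrK.
  by rewrite mulmx1.
have Ec : map_mx Num.conj (c *m Q + (1%:M - Q)) = Q + c *m (1%:M - Q).
  rewrite map_mxD map_mxM cc cQb map_mxB map_mx1 cQb.
  rewrite (_ : 1%:M - (1%:M - Q) = Q); first by rewrite addrC.
  by rewrite opprB addrC subrK.
have : \det c = z * Num.conj z.
  by rewrite -{1}E det_mulmx -Ec det_map_mx.
move=> ->; exact: mul_conjC_ge0.
Qed.
End L1.

Lemma spectral_ex (R : realType) n (A : 'M[R[i]]_n) : A *m ct A = ct A *m A ->
  exists Q (e : 'I_n -> R[i]), Q *m ct Q = 1%:M /\ A = ct Q *m dg e *m Q.
Proof.
move=> H; have An : A \is normalmx by apply/eqP.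
exists (spectralmx A), (fun k => spectral_diag A 0 k); split.
  by have /unitarymxP := spectral_unitarymx A.
have E : A = invmx (spectralmx A) *m diag_mx (spectral_diag A) *m spectralmx A.
  exact/orthomx_spectralP.
have U := spectral_unitarymx A.
rewrite {1}E (invmx_unitary U).
have -> : diag_mx (spectral_diag A) = dg (fun k => spectral_diag A 0 k).
  by rewrite /dg; congr diag_mx; apply/rowP=> k; rewrite mxE.
by [].
Qed.

Section Main.
Variables (R : realType) (n : nat) (T : 'M[R]_n).
Local Notation C := (R[i]).
Hypothesis TT : T *m T^T = 1%:M.
Hypothesis nE1 : ~ eigenvalue T 1.
Hypothesis nEm1 : ~ eigenvalue T (-1).

Lemma TtT : T^T *m T = 1%:M. Proof. exact: mulmx1C. Qed.

Lemma ctM p q r (A : 'M[C]_(p, q)) (B : 'M[C]_(q, r)) : ct (A *m B) = ct B *m ct A.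
Proof. by rewrite /ct trmx_mul ccM. Qed.
Lemma ctK p q (A : 'M[C]_(p, q)) : ct (ct A) = A.
Proof. by rewrite /ct -cc_tr trmxK ccK. Qed.
Lemma ct_cx p q (A : 'M[R]_(p, q)) : ct (cx A) = cx A^T.
Proof. by rewrite /ct -cx_tr cc_cx. Qed.

Let T' := cx T.
Variables (P : 'M[C]_n) (dd : 'I_n -> C).
Let Pc := ct P.
Let Pb := cc P.
Let D := dg dd.
Let Dc := cc D.
Hypothesis PPc : P *m Pc = 1%:M.
Hypothesis TE : T' = Pc *m D *m P.
Lemma PcP : Pc *m P = 1%:M.
Proof. exact: mulmx1C PPc. Qed.

Lemma DcE : Dc = dg (fun k => Num.conj (dd k)).
Proof. exact: cc_dg. Qed.
Lemma ctD : ct D = Dc.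
Proof. by rewrite /ct dg_tr. Qed.
Lemma ctT : ct T' = Pc *m Dc *m P.
Proof. by rewrite TE !ctM ctK ctD mulmxA. Qed.
Lemma ctT2 : ct T' = T'^T.
Proof. by rewrite /T' ct_cx cx_tr. Qed.
Lemma PcT : Pc^T = Pb.
Proof. by rewrite /Pc /ct -cc_tr trmxK. Qed.
Lemma E1 : Pc *m Dc *m P = P^T *m D *m Pb.
Proof. by rewrite -ctT ctT2 TE !trmx_mul dg_tr PcT mulmxA. Qed.
Lemma PbPt : Pb *m P^T = 1%:M.
Proof.
rewrite -[LHS]ccK ccM /Pb ccK.
have -> : cc P^T = Pc by [].
by rewrite PPc cc1.
Qed.
Lemma PtPb : P^T *m Pb = 1%:M.
Proof. exact: mulmx1C PbPt. Qed.

Let X := P *m P^T.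
Lemma XD : Dc *m X = X *m D.
Proof.
have := congr1 (fun M => P *m M *m P^T) E1; rewrite /= !mulmxA PPc mul1mx.
by rewrite -!mulmxA PbPt mulmx1 !mulmxA.
Qed.
Lemma ccX : cc X = Pb *m Pc.
Proof. by rewrite /X ccM. Qed.
Lemma XXb : X *m cc X = 1%:M.
Proof. by rewrite ccX /X mulmxA -(mulmxA P) PtPb mulmx1 PPc. Qed.
Lemma XbX : cc X *m X = 1%:M.
Proof. exact: mulmx1C XXb. Qed.
Lemma Xtr : X^T = X.
Proof. by rewrite /X trmx_mul trmxK. Qed.
Lemma DDc : D *m Dc = 1%:M.
Proof.
have H : T' *m ct T' = 1%:M by rewrite ct_cx /T' -cxM TT cx1.
have := congr1 (fun M => P *m M *m Pc) H; rewrite /= ctT TE.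
rewrite !mulmxA PPc mul1mx -!mulmxA PPc mulmx1.
by rewrite !mulmxA -(mulmxA D P Pc) PPc mulmx1 mulmx1 PPc => <-.
Qed.
Lemma ddc k : dd k * Num.conj (dd k) = 1.
Proof.
by have /matrixP /(_ k k) := DDc; rewrite DcE dgM dgE mxE eqxx mulr1n.
Qed.

Lemma eig_det (a : R) : \det (T - a%:M) = 0 -> eigenvalue T a.
Proof.
by move=> H; rewrite /eigenvalue /eigenspace kermx_eq0 row_free_unit unitmxE unitfE H eqxx.
Qed.

Lemma conj_sandwich (M : 'M[C]_n) : Pc *m M *m P = 1%:M -> M = 1%:M.
Proof.
move=> H; have := congr1 (fun A => P *m A *m Pc) H.
by rewrite /= !mulmxA PPc mul1mx -mulmxA PPc mulmx1 mulmx1 PPc.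
Qed.

Lemma Imnz k : complex.Im (dd k) != 0.
Proof.
apply/negP => /eqP Im0.
pose r := complex.Re (dd k).
have dkE : dd k = (r%:C)%C by rewrite /r; move: (dd k) Im0 => [a b] /= ->.
have r2 : r * r = 1.
  apply: (@complexI R); rewrite rmorphM rmorph1 /= -{2}dkE.
  have := ddc k; rewrite dkE conjE /= oppr0 => <-; by [].
have detz : \det (T - r%:M) = 0.
  apply: (@complexI R); rewrite rmorph0 -det_map_mx map_mxB map_scalar_mx /=.
  have -> : map_mx (real_complex R) T = T' by [].
  rewrite -dkE TE.
  have -> : Pc *m D *m P - (dd k)%:M = Pc *m (D - (dd k)%:M) *m P.
    by rewrite mulmxBr mulmxBl (scalar_mxC _ Pc) -(mulmxA _ Pc P) PcP mulmx1.
  have hd : \det Pc * \det P = 1 by rewrite -det_mulmx PcP det1.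
  rewrite !det_mulmx mulrAC hd mul1r.
  have -> : D - (dd k)%:M = dg (fun j => dd j - dd k).
    by apply/matrixP=> i j; rewrite /D !mxE mulrnBl.
  by rewrite det_dg (bigD1 k) //= subrr mul0r.
have : r ^+ 2 == 1 by rewrite expr2 r2.
rewrite sqrf_eq1 => /orP [] /eqP rE.
  by apply: nE1; apply: eig_det; rewrite -rE.
by apply: nEm1; apply: eig_det; rewrite -rE.
Qed.

Lemma Im_conj (z : C) : complex.Im (Num.conj z) = - complex.Im z.
Proof. by case: z. Qed.

Lemma Xzero j k : (0 < complex.Im (dd j)) = (0 < complex.Im (dd k)) -> X j k = 0.
Proof.
move=> hs.
have hne : Num.conj (dd j) != dd k.
  apply/negP => /eqP /(congr1 (@complex.Im R)); rewrite Im_conj => h.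
  have := Imnz j; have := Imnz k; move: hs; rewrite -h.
  case: (ltrgt0P (complex.Im (dd j))) => hj //=.
    by rewrite oppr_gt0 ltNge (ltW hj).
  by rewrite oppr_gt0 hj.
have /matrixP /(_ j k) := XD; rewrite DcE dgMl /D dgMr => /eqP.
rewrite mulrC -subr_eq0 -mulrBr mulf_eq0 subr_eq0 eq_sym (negPf hne) /=.
by rewrite orbF eq_sym => /eqP.
Qed.

Let pf k : C := ((0 < complex.Im (dd k))%R)%:R.
Let qf k : C := 1 - pf k.
Let pi := dg pf.
Let qi := dg qf.

Lemma piq : pi + qi = 1%:M.
Proof. by apply/matrixP=> i j; rewrite /pi /qi !mxE -mulrnDl /qf addrC subrK. Qed.

Lemma qiE : qi = 1%:M - pi.
Proof. by rewrite -piq [pi + qi]addrC addrK. Qed.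
Lemma cc_nat (b : bool) : Num.conj (b%:R : C) = b%:R.
Proof. exact: rmorph_nat. Qed.
Lemma ccpi : cc pi = pi.
Proof. by apply/matrixP=> i j; rewrite /pi mxE !dgE rmorphMn /pf rmorph_nat. Qed.
Lemma ccqi : cc qi = qi.
Proof. by rewrite qiE /cc map_mxB map_mx1 -/(cc pi) ccpi. Qed.
Lemma ctpi : ct pi = pi.
Proof. by rewrite /ct dg_tr ccpi. Qed.
Lemma pipi : pi *m pi = pi.
Proof.
apply/matrixP=> i j; rewrite /pi dgMl dgE mulrnAr /pf.
by case: (0 < _)%R; rewrite ?mulr1 ?mulr0.
Qed.
Lemma qiqi : qi *m qi = qi.
Proof. by rewrite qiE mulmxBl mul1mx mulmxBr mulmx1 pipi subrr subr0. Qed.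
Lemma piqi : pi *m qi = 0.
Proof. by rewrite qiE mulmxBr mulmx1 pipi subrr. Qed.
Lemma qipi : qi *m pi = 0.
Proof. by rewrite qiE mulmxBl mul1mx pipi subrr. Qed.

Lemma piXpi : pi *m X *m pi = 0.
Proof.
apply/matrixP=> j k; rewrite /pi dgMr dgMl /pf.
case hj: (0 < _)%R; case hk: (0 < _)%R; rewrite [RHS]mxE ?mul0r ?mulr0 //.
by rewrite mulr1 mul1r; apply: Xzero; rewrite hj hk.
Qed.
Lemma qiXqi : qi *m X *m qi = 0.
Proof.
apply/matrixP=> j k; rewrite /qi dgMr dgMl /qf /pf.
case hj: (0 < _)%R; case hk: (0 < _)%R; rewrite [RHS]mxE ?subrr ?mul0r ?mulr0 //.
by rewrite subr0 mulr1 mul1r; apply: Xzero; rewrite hj hk.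
Qed.

Let Xb := cc X.
Lemma piXbpi : pi *m Xb *m pi = 0.
Proof. by rewrite /Xb -ccpi -!ccM piXpi /cc map_mx0. Qed.

Lemma Xpi : X *m pi = qi *m X *m pi.
Proof.
have := congr1 (fun M => M *m X *m pi) piq.
by rewrite /= mul1mx !mulmxDl piXpi add0r.
Qed.

Lemma XpiXb : X *m pi *m Xb = qi.
Proof.
have piE : pi = 1%:M - qi by rewrite -piq addrK.
rewrite Xpi piE mulmxBr mulmx1 mulmxBl qiXqi mul0mx subr0.
by rewrite -mulmxA XXb mulmx1.
Qed.


Let W := pi *m Xb + X *m pi.

Lemma W2 : W *m W = 1%:M.
Proof. exact: (W2_g piq pipi piXpi qiXqi piXbpi XXb XbX). Qed.
Lemma trW : \tr W = 0.
Proof. exact: (trW_g pipi piXpi piXbpi). Qed.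

Lemma ctX : ct X = Xb.
Proof. by rewrite /ct Xtr. Qed.
Lemma ctXb : ct Xb = X.
Proof. by rewrite /ct /Xb cc_tr ccK Xtr. Qed.

Lemma ctD2 p (A B : 'M[C]_p) : ct (A + B) = ct A + ct B.
Proof. by rewrite /ct /cc linearD /= map_mxD. Qed.

Lemma ctW : ct W = W.
Proof. by rewrite /W ctD2 (ctM pi Xb) (ctM X pi) ctpi ctX ctXb addrC. Qed.

Lemma piD : pi *m D = D *m pi.
Proof. exact: dgC. Qed.
Lemma piDc : pi *m Dc = Dc *m pi.
Proof. by rewrite DcE; apply: dgC. Qed.
Lemma DcD : Dc *m D = 1%:M.
Proof. by rewrite DcE dgC -DcE DDc. Qed.
Lemma XbD : Xb *m D = Dc *m Xb.
Proof.
have H : D *m Xb = Xb *m Dc.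
  have := congr1 (fun M => cc M) XD; rewrite (ccM Dc X) (ccM X D) /Dc ccK.
  by [].
have := congr1 (fun M => Dc *m M *m D) H.
by rewrite /= (mulmxA Dc D Xb) DcD mul1mx -(mulmxA Dc (Xb *m Dc) D) -(mulmxA Xb Dc D) DcD mulmx1.
Qed.

Lemma WD : W *m D = Dc *m W.
Proof.
rewrite /W mulmxDl mulmxDr -(mulmxA pi Xb D) XbD (mulmxA pi Dc Xb) piDc.
rewrite -(mulmxA X pi D) piD (mulmxA X D pi) -XD.
by rewrite (mulmxA Dc pi Xb) (mulmxA Dc X pi).
Qed.

Lemma ccXb : cc Xb = X.
Proof. exact: ccK. Qed.

Let g' := Pc *m W *m P.
Lemma g'2 : g' *m g' = 1%:M.
Proof. by rewrite /g' (conjM W W PPc) W2 mulmx1 PcP. Qed.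
Lemma g'T : g' *m T' = T'^T *m g'.
Proof. by rewrite -ctT2 ctT TE /g' (conjM W D PPc) (conjM Dc W PPc) WD. Qed.
Lemma ctg' : ct g' = g'.
Proof. by rewrite /g' (ctM (Pc *m W) P) (ctM Pc W) ctW /Pc ctK mulmxA. Qed.
Lemma trg' : \tr g' = 0.
Proof. by rewrite /g' tr_conj ?PPc // trW. Qed.
Lemma ccg' : cc g' = g'.
Proof.
rewrite /g' (ccM (Pc *m W) P) (ccM Pc W) /W.
have -> : cc Pc = P^T by rewrite /Pc /ct ccK.
rewrite /cc map_mxD -!/(cc _) (ccM pi Xb) (ccM X pi) ccpi ccXb.
have -> : cc P = Pb by [].
rewrite /Xb ccX.
exact: (real_g pi PcP PtPb).
Qed.

Lemma det_comm (c : 'M[R]_n) : c *m T = T *m c -> 0 <= \det c.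
Proof.
move=> cT.
pose c' := cx c.
have cT' : c' *m T' = T' *m c' by rewrite /c' /T' -!cxM cT.
pose N := P *m c' *m Pc.
have c'E : c' = Pc *m N *m P by rewrite /N conj_cancel // PcP.
have ND : N *m D = D *m N.
  apply: (conj_inj PcP PPc).
  by rewrite -(conjM N D PPc) -(conjM D N PPc) -c'E -TE.
have Npi : N *m pi = pi *m N.
  apply/matrixP=> j k; rewrite dgMr dgMl /pf.
  have /matrixP /(_ j k) := ND; rewrite dgMr dgMl => E.
  have Nz : dd j != dd k -> N j k = 0.
    move=> hne; move: E => /eqP; rewrite [N j k * dd k]mulrC -subr_eq0 -mulrBl.
    by rewrite mulf_eq0 subr_eq0 eq_sym (negPf hne) /= => /eqP.
  case hj: (0 < complex.Im (dd j))%R; case hk: (0 < complex.Im (dd k))%R;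
    rewrite ?mulr1 ?mul1r ?mulr0 ?mul0r //.
    by rewrite Nz //; apply/eqP => djk; move: hj; rewrite djk hk.
  by rewrite Nz //; apply/eqP => djk; move: hj; rewrite djk hk.
pose Q := Pc *m pi *m P.
have cQ : c' *m Q = Q *m c' by rewrite c'E /Q !(conjM _ _ PPc) Npi.
have QQ : Q *m Q = Q by rewrite /Q (conjM pi pi PPc) pipi.
have ccc : map_mx Num.conj c' = c' by apply: cc_cx.
have ccQ : map_mx Num.conj Q = 1%:M - Q.
  change (cc Q = 1%:M - Q).
  rewrite /Q (ccM (Pc *m pi) P) (ccM Pc pi) ccpi.
  have -> : cc Pc = P^T by rewrite /Pc /ct ccK.
  have -> : 1%:M - Pc *m pi *m P = Pc *m qi *m P.
    by rewrite qiE mulmxBr mulmx1 mulmxBl PcP.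
  rewrite -XpiXb /Xb ccX /X.
  by rewrite !mulmxA PcP mul1mx -!mulmxA PcP mulmx1.
have := L1 cQ QQ ccc ccQ.
by rewrite /c' det_map_mx /= ler0c.
Qed.

Let g := map_mx (@complex.Re R) g'.
Lemma g'E : g' = cx g.
Proof. exact: real_mx ccg'. Qed.
Lemma gg : g *m g = 1%:M.
Proof. by apply: cx_inj; rewrite cxM -g'E g'2 cx1. Qed.
Lemma gT : g *m T = T^T *m g.
Proof. by apply: cx_inj; rewrite !cxM -g'E cx_tr g'T. Qed.
Lemma gtr : g^T = g.
Proof.
apply: cx_inj; rewrite cx_tr -g'E.
by rewrite -[RHS]ctg' /ct cc_tr ccg'.
Qed.
Lemma detg : exists s, n = (s + s)%N /\ \det g = (-1) ^+ s.
Proof.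
have [Q [e [QQ gE]]] : exists Q (e : 'I_n -> C), Q *m ct Q = 1%:M /\ g' = ct Q *m dg e *m Q.
  by apply: spectral_ex; rewrite ctg'.
have QcQ : ct Q *m Q = 1%:M by apply: mulmx1C.
have e2 k : e k ^+ 2 = 1.
  have : dg e *m dg e = 1%:M.
    by apply: (conj_inj QcQ QQ); rewrite -(conjM _ _ QQ) -gE g'2 mulmx1.
  by rewrite dgM -dg1 => /matrixP /(_ k k); rewrite !dgE eqxx !mulr1n expr2.
have e0 : \sum_k e k = 0 by rewrite -tr_dg -(tr_conj _ QQ) -gE trg'.
have [s [ns ps]] := sign_count e2 e0.
exists s; split=> //; apply: (@complexI R).
by rewrite -det_map_mx -/(cx g) -g'E gE det_mulmx det_mulmx mulrAC -det_mulmx QcQ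
  det1 mul1r det_dg ps rmorphXn rmorphN1.
Qed.

Lemma det_sq (h : 'M[R]_n) : h *m h^T = 1%:M -> \det h * \det h = 1.
Proof. by move=> H; rewrite -{2}det_tr -det_mulmx H det1. Qed.

Lemma conjugators (h : 'M[R]_n) : h *m h^T = 1%:M -> h *m T = T^T *m h ->
  \det h = \det g.
Proof.
move=> hh hT.
have Tg : T *m g = g *m T^T.
  have : T *m (g *m T) *m T^T = T *m (T^T *m g) *m T^T by rewrite gT.
  by rewrite !mulmxA TT mul1mx -!mulmxA TT mulmx1.
have cT : (g *m h) *m T = T *m (g *m h).
  by rewrite -mulmxA hT mulmxA -Tg mulmxA.
have := det_comm cT; rewrite det_mulmx => H0.
have gsq : \det g * \det g = 1 by apply: det_sq; rewrite gtr gg.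
have hsq := det_sq hh.
have p2 : (\det g * \det h) ^+ 2 == 1.
  by rewrite expr2 mulrACA gsq hsq mulr1.
move: p2; rewrite sqrf_eq1 => /orP [/eqP p1|/eqP pm1].
  have := congr1 (fun x => \det g * x) p1.
  by rewrite /= mulrA gsq mul1r mulr1.
by move: H0; rewrite pm1 oppr_ge0 ler10.
Qed.

Lemma main_res : exists (G : 'M[R]_n) (s : nat),
  [/\ G *m G = 1%:M, G^T = G, G *m T = T^T *m G, n = (s + s)%N & \det G = (-1) ^+ s] /\
  (forall h, h *m h^T = 1%:M -> h *m T = T^T *m h -> \det h = \det G).
Proof.
have [s [ns ds]] := detg.
exists g, s; split; first by split; [exact: gg|exact: gtr|exact: gT|exact: ns|exact: ds].
exact: conjugators.
Qed.

End Main.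

Lemma invmx_orth (R : fieldType) n (A : 'M[R]_n) : A *m A^T = 1%:M -> invmx A = A^T.
Proof.
move=> H; have U : A \in unitmx by case: (mulmx1_unit H).
by rewrite -[LHS]mulmx1 -H mulmxA mulVmx // mul1mx.
Qed.

Theorem proposition3p4 (R : realType) (n : nat) (T : 'M[R]_n) :
  in_SO T ->
  ~ eigenvalue T 1 -> ~ eigenvalue T (-1) ->
  (real_in_SO T <-> (n %% 4 <> 2)%N).
Proof.
move=> [TT dT] n1 nm1.
have [P [dd [PPc TE]]] : exists P (dd : 'I_n -> R[i]), P *m ct P = 1%:M /\ cx T = ct P *m dg dd *m P.
  apply: spectral_ex.
  by rewrite ct_cx -!cxM TT (mulmx1C TT).
have [G [s [[GG Gt GT ns dG] Hh]]] := main_res TT n1 nm1 PPc TE.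
have iT := invmx_orth TT.
split.
  move=> [h [[hh dh] hE]].
  have hU : h \in unitmx by rewrite unitmxE dh unitr1.
  have hT : h *m T = T^T *m h.
    by rewrite -iT -hE -mulmxA mulVmx // mulmx1.
  have := Hh h hh hT; rewrite dh dG => /esym.
  rewrite -signr_odd; case so: (odd s).
    by move=> /eqP; rewrite expr1 -subr_eq0 -opprD oppr_eq0 -mulr2n pnatr_eq0.
  move=> _; have := odd_double_half s; rewrite so add0n -mul2n => es; lia.
move=> hn.
have so : odd s = false.
  apply/negbTE/negP => so; apply: hn.
  have := odd_double_half s; rewrite so -mul2n => es; lia.
exists G; split.
  split; first by rewrite Gt.
  by rewrite dG -signr_odd so.
have GU : G \in unitmx by case: (mulmx1_unit GG).
have iG : invmx G = G by rewrite -[LHS]mulmx1 -GG mulmxA mulVmx // mul1mx.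
by rewrite iG iT GT -mulmxA GG mulmx1.
Qed.
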